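(* Let $A=(a_{i,j})_{i,j=0}^1$ be a $2\times2$ matrix with entries in a commutative ring, and for $n\ge0$ let $A^{\{n\}}=(a^{\{n\}}_{i,j})_{i,j=0}^n$ be its second kind $n$-th Kronecker power. Use the convention that $a^{\{m\}}_{i,j}=0$ whenever an index $i$ or $j$ lies outside $\{0,\dots,m\}$. Then for $n\ge1$ and $0\le j\le n$: Recurrence I: $a^{\{n\}}_{i,j}=a_{0,0}a^{\{n-1\}}_{i,j}+a_{0,1}a^{\{n-1\}}_{i,j-1}$ for $0\le i\le n-1$, and $a^{\{n\}}_{n,j}=a_{1,0}a^{\{n-1\}}_{n-1,j}+a_{1,1}a^{\{n-1\}}_{n-1,j-1}$. Recurrence II: $a^{\{n\}}_{0,j}=a_{0,0}a^{\{n-1\}}_{0,j}+a_{0,1}a^{\{n-1\}}_{0,j-1}$, and $a^{\{n\}}_{i,j}=a_{1,0}a^{\{n-1\}}_{i-1,j}+a_{1,1}a^{\{n-1\}}_{i-1,j-1}$ for $1\le i\le n$. In matrix form, with $L^0_{n-1}=(I_n\mid 0)$ and $L^1_{n-1}=(0\mid I_n)$ the $n\times(n+1)$ matrices obtained by appending a zero column on the right, resp. on the left, of $I_n$: $$A^{\{n\}}=\begin{pmatrix}a_{0,0}I_n\\ (0,\dots,0,a_{1,0})\end{pmatrix}A^{\{n-1\}}L^0_{n-1}+\begin{pmatrix}a_{0,1}I_n\\ (0,\dots,0,a_{1,1})\end{pmatrix}A^{\{n-1\}}L^1_{n-1},$$ $$A^{\{n\}}=\begin{pmatrix}(a_{0,0},0,\dots,0)\\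 a_{1,0}I_n\end{pmatrix}A^{\{n-1\}}L^0_{n-1}+\begin{pmatrix}(a_{0,1},0,\dots,0)\\ a_{1,1}I_n\end{pmatrix}A^{\{n-1\}}L^1_{n-1},$$ where the left factors are $(n+1)\times n$ matrices.
   Context: Second kind Kronecker power: for $A=(a_{i,j})_{i,j=0}^1$ and the linear substitution $z_1=a_{0,0}t_1+a_{0,1}t_2$, $z_2=a_{1,0}t_1+a_{1,1}t_2$, the matrix $A^{\{n\}}=(a^{\{n\}}_{i,j})_{i,j=0}^n$ is defined by $z_1^{n-i}z_2^{i}=\sum_{j=0}^n a^{\{n\}}_{i,j}\,t_1^{n-j}t_2^{j}$ for $0\le i\le n$; $A^{\{0\}}=1$, $A^{\{1\}}=A$. Explicitly $a^{\{n\}}_{i,j}=\sum_{k=0}^j\binom{n-i}{k}\binom{i}{j-k}a_{0,0}^{n-i-k}a_{0,1}^{k}a_{1,0}^{i-j+k}a_{1,1}^{j-k}$, with $\binom{m}{l}=0$ if $m<l$. *)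

(* Defs.v *)
From HB Require Import structures.
From mathcomp Require Import all_boot all_order all_algebra.
Set Implicit Arguments. Unset Strict Implicit. Unset Printing Implicit Defensive.
Import Order.TTheory GRing.Theory Num.Theory.
Local Open Scope ring_scope.

(* Entries a_{k,l} of A are A k l with k l : 'I_2.
   z1 = a00 t1 + a01 t2, z2 = a10 t1 + a11 t2; since z1^(n-i) z2^i is
   homogeneous of degree n, its coefficient of t1^(n-j) t2^j equals the
   coefficient of X^j in the dehomogenised polynomial
   (a00 + a01 X)^(n-i) * (a10 + a11 X)^i  (set t1 = 1, t2 = X). *)

Definition kron2_poly (R : comNzRingType) (A : 'M[R]_2) (n i : nat) : {poly R} :=
  ((A 0 0)%:P + (A 0 1)%:P * 'X) ^+ (n - i) * ((A 1 0)%:P + (A 1 1)%:P * 'X) ^+ i.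

Definition kron2 (R : comNzRingType) (A : 'M[R]_2) (n : nat) : 'M[R]_n.+1 :=
  \matrix_(i < n.+1, j < n.+1) (kron2_poly A n i)`_j.

Definition kext (R : comNzRingType) (A : 'M[R]_2) (m : nat) (i j : int) : R :=
  if [&& (0 <= i), (i <= m%:Z), (0 <= j) & (j <= m%:Z)]
  then (kron2_poly A m `|i|%N)`_`|j|%N else 0.

Definition Lzero (R : comNzRingType) (n : nat) : 'M[R]_(n, n.+1) :=
  \matrix_(i < n, j < n.+1) (i == j :> nat)%:R.
Definition Lone (R : comNzRingType) (n : nat) : 'M[R]_(n, n.+1) :=
  \matrix_(i < n, j < n.+1) (j == i.+1 :> nat)%:R.

Definition topI (R : comNzRingType) (n : nat) (a b : R) : 'M[R]_(n.+1, n) :=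
  \matrix_(i < n.+1, k < n)
    (if (i < n)%N then a * (i == k :> nat)%:R else b * (k == n.-1 :> nat)%:R).

Definition botI (R : comNzRingType) (n : nat) (a b : R) : 'M[R]_(n.+1, n) :=
  \matrix_(i < n.+1, k < n)
    (if (i == 0 :> nat) then a * (k == 0 :> nat)%:R else b * (i.-1 == k :> nat)%:R).

(* Main.v *)
Require Import Defs.
From HB Require Import structures.
From mathcomp Require Import all_boot all_order all_algebra.
From mathcomp Require Import ring zify.
Import Order.TTheory GRing.Theory Num.Theory.
Local Open Scope ring_scope.

Section S.
Variable R : comNzRingType.

Lemma coefL (a b : R) (p : {poly R}) j :
  ((a%:P + b%:P * 'X) * p)`_j = a * p`_j + (if j is j'.+1 then b * p`_j' else 0).
Proof.
rewrite mulrDl coefD coefCM -mulrA coefCM coefXM.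
by case: j => [|j] //=; rewrite mulr0.
Qed.

Lemma size_kp (A : 'M[R]_2) m i : (i <= m)%N -> (size (kron2_poly A m i) <= m.+1)%N.
Proof.
rewrite /kron2_poly => him.
have H : forall e1 e2 : nat, leq (size (((A 0 0)%:P + (A 0 1)%:P * 'X) ^+ e1 * ((A 1 0)%:P + (A 1 1)%:P * 'X) ^+ e2)) (e1 + e2).+1.
  elim=> [|e1 IH] e2.
    rewrite expr0 mul1r add0n; elim: e2 => [|e2 IH2]; first by rewrite expr0 size_poly1.
    rewrite exprS; apply/leq_sizeP => j hj; rewrite coefL.
    move/leq_sizeP: IH2 => IH2; rewrite IH2 ?(leq_trans _ hj) //.
    case: j hj => [//|j hj]; rewrite IH2 ?mulr0 ?addr0 //.
  rewrite exprS -mulrA; apply/leq_sizeP => j hj; rewrite coefL.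
  move/leq_sizeP: (IH e2) => IH2; rewrite IH2 ?(leq_trans _ hj) //.
  case: j hj => [//|j hj]; rewrite IH2 ?mulr0 ?addr0 //.
by have := H (m - i)%N i; rewrite subnK.
Qed.

Lemma kpS0 (A : 'M[R]_2) m i : (i <= m)%N ->
  kron2_poly A m.+1 i = ((A 0 0)%:P + (A 0 1)%:P * 'X) * kron2_poly A m i.
Proof. by move=> h; rewrite /kron2_poly subSn // exprS mulrA. Qed.

Lemma kpS1 (A : 'M[R]_2) m i :
  kron2_poly A m.+1 i.+1 = ((A 1 0)%:P + (A 1 1)%:P * 'X) * kron2_poly A m i.
Proof. by rewrite /kron2_poly subSS exprS mulrCA. Qed.

Lemma kextN (A : 'M[R]_2) m (i j : nat) :
  kext A m i j = if (i <= m)%N then (kron2_poly A m i)`_j else 0.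
Proof.
rewrite /kext !lez_nat /= ?absz_nat.
case: (leqP i m) => hi //=; case: (leqP j m) => hj //.
by rewrite nth_default // (leq_trans (size_kp A _ _ hi)).
Qed.

Lemma PS (j : nat) : j.+1%:Z - 1 = j%:Z :> int.
Proof. by rewrite -addn1 PoszD addrK. Qed.

Lemma kextP (A : 'M[R]_2) m (i j : nat) :
  kext A m i (j%:Z - 1) = if (i <= m)%N then (if j is j'.+1 then (kron2_poly A m i)`_j' else 0) else 0.
Proof.
case: j => [|j]; last by rewrite PS kextN.
by rewrite /kext /= !andbF; case: ifP.
Qed.

Lemma sel (F : nat -> R) n j : \sum_(k < n) F k * ((k:nat) == j)%:R = if (j < n)%N then F j else 0.
Proof.
case: ifP => hj.
  rewrite (bigD1 (Ordinal hj)) //= eqxx mulr1 big1 ?addr0 // => k hk.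
  case: eqP => e; last by rewrite mulr0.
  by move: hk; rewrite -val_eqE /= e eqxx.
rewrite big1 // => k _; case: eqP => e; last by rewrite mulr0.
by move: hj; rewrite -e ltn_ord.
Qed.

Lemma sel1 (F : nat -> R) n j : \sum_(k < n) F k * ((j:nat) == k.+1)%:R =
  if j is j'.+1 then (if (j' < n)%N then F j' else 0) else 0.
Proof.
case: j => [|j]; last by rewrite -sel; apply: eq_bigr => k _; rewrite eqSS eq_sym.
by rewrite big1 // => k _; rewrite mulr0.
Qed.

Lemma HL0 p n (M : 'M[R]_(p, n)) (F : nat -> R) i j :
  (forall k : 'I_n, M i k = F k) -> (M *m Lzero R n) i j = if (j < n)%N then F j else 0.
Proof.
move=> HF; rewrite mxE -sel; apply: eq_bigr => k _; by rewrite mxE HF.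
Qed.

Lemma HL1 p n (M : 'M[R]_(p, n)) (F : nat -> R) i j :
  (forall k : 'I_n, M i k = F k) -> (M *m Lone R n) i j =
   if (j:nat) is j'.+1 then (if (j' < n)%N then F j' else 0) else 0.
Proof.
move=> HF; rewrite mxE -sel1; apply: eq_bigr => k _; by rewrite mxE HF.
Qed.

Lemma HT (A : 'M[R]_2) m (a b : R) (i : 'I_m.+2) (l : 'I_m.+1) :
  (topI m.+1 a b *m kron2 A m) i l =
   if (i < m.+1)%N then a * (kron2_poly A m i)`_l else b * (kron2_poly A m m)`_l.
Proof.
rewrite mxE; under eq_bigr do rewrite !mxE.
case: ifP => hi.
  transitivity (a * \sum_(k < m.+1) (fun k => (kron2_poly A m k)`_l) k * ((k:nat) == i)%:R).
    rewrite big_distrr; apply: eq_bigr => k _ /=; rewrite eq_sym; ring.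
  by rewrite (sel (fun k => (kron2_poly A m k)`_l)) hi.
transitivity (b * \sum_(k < m.+1) (fun k => (kron2_poly A m k)`_l) k * ((k:nat) == m)%:R).
  rewrite big_distrr; apply: eq_bigr => k _ /=; ring.
by rewrite (sel (fun k => (kron2_poly A m k)`_l)) ltnSn.
Qed.

Lemma HB (A : 'M[R]_2) m (a b : R) (i : 'I_m.+2) (l : 'I_m.+1) :
  (botI m.+1 a b *m kron2 A m) i l =
   if (i == 0 :> nat) then a * (kron2_poly A m 0)`_l else b * (kron2_poly A m i.-1)`_l.
Proof.
rewrite mxE; under eq_bigr do rewrite !mxE.
case: ifP => hi.
  transitivity (a * \sum_(k < m.+1) (fun k => (kron2_poly A m k)`_l) k * ((k:nat) == 0%N)%:R).
    rewrite big_distrr; apply: eq_bigr => k _ /=; ring.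
  by rewrite (sel (fun k => (kron2_poly A m k)`_l)).
have hi' : (i.-1 < m.+1)%N by case: i hi => [[|i]] //=.
transitivity (b * \sum_(k < m.+1) (fun k => (kron2_poly A m k)`_l) k * ((k:nat) == i.-1)%:R).
  rewrite big_distrr; apply: eq_bigr => k _ /=; rewrite eq_sym; ring.
by rewrite (sel (fun k => (kron2_poly A m k)`_l)) hi'.
Qed.

End S.

Theorem lemma5p1 (R : comNzRingType) (A : 'M[R]_2) (m : nat) :
  let n := m.+1 in
  let a00 := A 0 0 in let a01 := A 0 1 in
  let a10 := A 1 0 in let a11 := A 1 1 in
  (* Recurrence I *)
  (forall i j : nat, (i <= n.-1)%N -> (j <= n)%N ->
     kext A n i j = a00 * kext A n.-1 i j + a01 * kext A n.-1 i (j%:Z - 1)) /\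
  (forall j : nat, (j <= n)%N ->
     kext A n n j = a10 * kext A n.-1 n.-1 j + a11 * kext A n.-1 n.-1 (j%:Z - 1)) /\
  (* Recurrence II *)
  (forall j : nat, (j <= n)%N ->
     kext A n 0 j = a00 * kext A n.-1 0 j + a01 * kext A n.-1 0 (j%:Z - 1)) /\
  (forall i j : nat, (1 <= i <= n)%N -> (j <= n)%N ->
     kext A n i j = a10 * kext A n.-1 (i%:Z - 1) j
                    + a11 * kext A n.-1 (i%:Z - 1) (j%:Z - 1)) /\
  (* matrix forms *)
  kron2 A n = topI n a00 a10 *m kron2 A m *m Lzero R n
              + topI n a01 a11 *m kron2 A m *m Lone R n /\
  kron2 A n = botI n a00 a10 *m kron2 A m *m Lzero R n
              + botI n a01 a11 *m kron2 A m *m Lone R n.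
Proof.
cbv zeta; simpl predn.
have H1 : forall i j : nat, (i <= m)%N ->
     kext A m.+1 i j = A 0 0 * kext A m i j + A 0 1 * kext A m i (j%:Z - 1).
  move=> i j hi; rewrite !kextN kextP hi (leq_trans hi) // kpS0 // coefL.
  by case: j => [|j] /=; rewrite ?mulr0 ?addr0.
have H2 : forall i j : nat, (i <= m)%N ->
     kext A m.+1 i.+1 j = A 1 0 * kext A m i j + A 1 1 * kext A m i (j%:Z - 1).
  move=> i j hi; rewrite !kextN kextP hi ltnS hi kpS1 coefL.
  by case: j => [|j] /=; rewrite ?mulr0 ?addr0.
have Hsz : forall i, (i <= m)%N -> (kron2_poly A m i)`_m.+1 = 0.
  by move=> i hi; rewrite nth_default // size_kp.
split; first by move=> i j hi _; exact: H1.
split; first by move=> j _; exact: H2.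
split; first by move=> j _; exact: (H1 0%N j).
split; first by move=> [|i] j // /andP [_ hi] _; rewrite PS; exact: H2.
split.
  apply/matrixP => i j; rewrite [RHS]mxE.
  rewrite (HL0 _ _ _ _ (fun l : nat => if (i < m.+1)%N then A 0 0 * (kron2_poly A m i)`_l else A 1 0 * (kron2_poly A m m)`_l) _ _ (HT _ A _ _ _ i)).
  rewrite (HL1 _ _ _ _ (fun l : nat => if (i < m.+1)%N then A 0 1 * (kron2_poly A m i)`_l else A 1 1 * (kron2_poly A m m)`_l) _ _ (HT _ A _ _ _ i)).
  rewrite !mxE.
  case: (ltnP i m.+1) => hi.
    rewrite kpS0 // coefL.
    case: j => [[|j] hj] /=; first by rewrite addr0.
    have -> : (j < m.+1)%N by rewrite -ltnS.
    case: ltnP => hj' //.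
    have -> : j = m by lia.
    by rewrite Hsz // mulr0 add0r.
  have -> : (i : nat) = m.+1 by apply/eqP; rewrite eqn_leq hi -ltnS ltn_ord.
  rewrite kpS1 coefL.
  case: j => [[|j] hj] /=; first by rewrite addr0.
  have -> : (j < m.+1)%N by rewrite -ltnS.
    case: ltnP => hj' //.
  have -> : j = m by lia.
  by rewrite Hsz // mulr0 add0r.
apply/matrixP => i j; rewrite [RHS]mxE.
rewrite (HL0 _ _ _ _ (fun l : nat => if (i == 0 :> nat) then A 0 0 * (kron2_poly A m 0)`_l else A 1 0 * (kron2_poly A m i.-1)`_l) _ _ (HB _ A _ _ _ i)).
rewrite (HL1 _ _ _ _ (fun l : nat => if (i == 0 :> nat) then A 0 1 * (kron2_poly A m 0)`_l else A 1 1 * (kron2_poly A m i.-1)`_l) _ _ (HB _ A _ _ _ i)).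
rewrite !mxE.
case: i => [[|i] hi] /=.
  rewrite kpS0 // coefL.
  case: j => [[|j] hj] /=; first by rewrite addr0.
  have -> : (j < m.+1)%N by rewrite -ltnS.
    case: ltnP => hj' //.
  have -> : j = m by lia.
  by rewrite Hsz // mulr0 add0r.
have hi' : (i <= m)%N by rewrite -ltnS.
rewrite kpS1 coefL.
case: j => [[|j] hj] /=; first by rewrite addr0.
have -> : (j < m.+1)%N by rewrite -ltnS.
    case: ltnP => hj' //.
have -> : j = m by lia.
by rewrite Hsz // mulr0 add0r.
Qed.
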